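(* Let $L$ be the generator (with domain $D(L)$) of a conservative Markov process having a stationary distribution $\nu$, and define $\mathcal{E}(f,g)=-\int Lf(x)g(x)\,\nu(dx)$ for $f,g\in D(L)$. If $\mathcal{E}$ is not symmetric, then $\mathrm{Sect}(\mathcal{E})>1$.
   Context: The sector constant $\mathrm{Sect}(\mathcal{E})$ is the infimum of all finite constants $C$ such that $\mathcal{E}(f,g)\le C\,\mathcal{E}(f,f)^{1/2}\mathcal{E}(g,g)^{1/2}$ for all $f,g\in D(L)$, and $\mathrm{Sect}(\mathcal{E})=\infty$ if no such $C$ exists. (Here $\mathcal{E}(f,f)\ge0$.) *)

(* Defs.v *)
From HB Require Import structures.
From mathcomp Require Import all_boot all_order all_algebra.
From mathcomp Require Import all_classical all_reals all_analysis.
Set Implicit Arguments. Unset Strict Implicit. Unset Printing Implicit Defensive.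
Import Order.TTheory GRing.Theory Num.Theory.
Import numFieldNormedType.Exports.
Local Open Scope classical_set_scope.
Local Open Scope ring_scope.

Section MarkovDefs.
Context {d : measure_display} {T : measurableType d} {R : realType}.

(* A time-homogeneous conservative Markov transition function (P_t)_{t>=0}:
   each P t is a probability kernel (conservativity: P t x setT = 1),
   P 0 x = dirac x, and Chapman--Kolmogorov holds. *)
Definition markov_transition (P : R -> R.-pker T ~> T) : Prop :=
  (forall x A, measurable A -> P 0 x A = \d_x A) /\
  (forall s t, 0 <= s -> 0 <= t -> forall x A, measurable A ->
     P (s + t) x A = (\int[P s x]_y P t y A)%E).

Definition stationary (P : R -> R.-pker T ~> T) (nu : probability T R) : Prop :=
  forall t, 0 <= t -> forall A, measurable A ->
    (\int[nu]_x P t x A)%E = nu A.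

Definition Pt (P : R -> R.-pker T ~> T) (t : R) (f : T -> R) (x : T) : R :=
  fine (\int[P t x]_y (f y)%:E)%E.

Definition L2 (nu : probability T R) (f : T -> R) : Prop :=
  measurable_fun setT f /\ (\int[nu]_x ((f x) ^+ 2)%:E < +oo)%E.

(* g is (a version of) L f, where L is the generator of the semigroup in
   L^2(nu):  (P_t f - f)/t -> g in L^2(nu) as t -> 0+.  The domain D(L) is the
   set of f for which such a g exists. *)
Definition generator (P : R -> R.-pker T ~> T) (nu : probability T R)
  (f g : T -> R) : Prop :=
  L2 nu f /\ L2 nu g /\
  ((fun t => \int[nu]_x ((((Pt P t f x - f x) / t) - g x) ^+ 2)%:E)%E
     @ 0^'+ --> 0%E).

Definition dform (nu : probability T R) (Lf h : T -> R) : R :=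
  - fine (\int[nu]_x (Lf x * h x)%:E)%E.

Definition sector_bound (P : R -> R.-pker T ~> T) (nu : probability T R)
  (C : R) : Prop :=
  forall f Lf g Lg, generator P nu f Lf -> generator P nu g Lg ->
    dform nu Lf g <= C * Num.sqrt (dform nu Lf f) * Num.sqrt (dform nu Lg g).

(* Sect(E): infimum of admissible finite constants, +oo if there is none *)
Definition Sect (P : R -> R.-pker T ~> T) (nu : probability T R) : \bar R :=
  ereal_inf [set C%:E | C in [set C : R | sector_bound P nu C]].

Definition dform_symmetric (P : R -> R.-pker T ~> T) (nu : probability T R) :
  Prop :=
  forall f Lf g Lg, generator P nu f Lf -> generator P nu g Lg ->
    dform nu Lf g = dform nu Lg f.

End MarkovDefs.

(* Main.v *)
Require Import Defs.
From HB Require Import structures.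
From mathcomp Require Import all_boot all_order all_algebra.
From mathcomp Require Import all_classical all_reals all_analysis.
From mathcomp Require Import measurable_realfun.
From mathcomp Require Import ring lra.
Import Order.TTheory GRing.Theory Num.Theory.
Import numFieldNormedType.Exports.
Local Open Scope classical_set_scope.
Local Open Scope ring_scope.

Section S.
Context (d : measure_display) (T : measurableType d) (R : realType)
  (P : R -> R.-pker T ~> T) (nu : probability T R).
Hypothesis stat : stationary P nu.

Import HBNNSimple.

Lemma mker (t : R) (h : T -> \bar R) : (forall y, 0 <= h y)%E ->
  measurable_fun setT h -> measurable_fun setT (fun x => \int[P t x]_y h y)%E.
Proof.
move=> h0 mh; apply: measurable_fun_integral_kernel => //.
by move=> U mU; exact: measurable_kernel.
Qed.

Let stat_nnsfun t (t0 : 0 <= t) (f : {nnsfun T >-> R}) :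
  (\int[nu]_x (\int[P t x]_y (f y)%:E) = \int[nu]_y (f y)%:E)%E.
Proof.
under [in RHS]eq_integral do rewrite fimfunE -fsumEFin//.
rewrite [RHS]ge0_integral_fsum//; last 2 first.
  - by move=> r; exact/measurable_EFinP/measurableT_comp.
  - by move=> r z _; rewrite EFinM nnfun_muleindic_ge0.
under [in LHS]eq_integral.
  move=> x _.
  under eq_integral.
    by move=> z _; rewrite fimfunE -fsumEFin//; over.
  rewrite /= ge0_integral_fsum//; last 2 first.
    - by move=> r; exact/measurable_EFinP/measurableT_comp.
    - by move=> r z _; rewrite EFinM nnfun_muleindic_ge0.
  under eq_fsbigr.
    move=> r _.
    rewrite (integralZl_indic _ (fun r => f @^-1` [set r]))//; last first.
      by move=> r0; rewrite preimage_nnfun0.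
    rewrite integral_indic// setIT.
    over.
  over.
rewrite /= ge0_integral_fsum//; last 2 first.
  - move=> r; apply: measurable_funeM.
    exact: (measurable_kernel (P t) (f @^-1` [set r]) _).
  - move=> n y _.
    have := mulemu_ge0 (fun n => f @^-1` [set n]).
    by apply; exact: preimage_nnfun0.
apply: eq_fsbigr => r _.
rewrite (integralZl_indic _ (fun r => f @^-1` [set r]))//; last first.
  exact: preimage_nnfun0.
rewrite integral_indic// setIT.
have [r0|r0] := leP 0%R r.
  rewrite ge0_integralZl//; last exact: measurable_kernel.
  by rewrite stat.
rewrite preimage_nnfun0// measure0 mule0.
by rewrite integral0_eq// => y _; rewrite measure0 mule0.
Qed.

Lemma stat_int t (t0 : 0 <= t) (f : T -> \bar R) : (forall z, 0 <= f z)%E ->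
  measurable_fun setT f ->
  (\int[nu]_x (\int[P t x]_y f y) = \int[nu]_y f y)%E.
Proof.
move=> f0 mf.
pose f_ := nnsfun_approx measurableT mf.
transitivity (\int[nu]_x (\int[P t x]_z (lim ((f_ n z)%:E @[n --> \oo]))))%E.
  apply/eq_integral => x _; apply/eq_integral => z _.
  by apply/esym/cvg_lim => //=; exact: cvg_nnsfun_approx.
transitivity (\int[nu]_z (lim ((f_ n z)%:E @[n --> \oo])))%E; last first.
  by apply/eq_integral => z _; apply/cvg_lim => //=; exact: cvg_nnsfun_approx.
rewrite [RHS]monotone_convergence//; last 3 first.
  by move=> n; exact/measurable_EFinP.
  by move=> n z _; rewrite lee_fin.
  by move=> z _ a b ab; rewrite lee_fin; exact/lefP/nd_nnsfun_approx.
rewrite (_ : (fun _ => _) =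
    (fun n => \int[nu]_x (\int[P t x]_z (f_ n z)%:E)))%E; last first.
  by apply/funext => n; rewrite stat_nnsfun.
rewrite -monotone_convergence//; last 3 first.
  - move=> n; apply: mker.
    + by move=> z; rewrite lee_fin.
    + exact/measurable_EFinP.
  - by move=> n y _; apply: integral_ge0 => // z _; rewrite lee_fin.
  - move=> y _ a b ab; apply: ge0_le_integral => //.
    + by move=> z _; rewrite lee_fin.
    + exact/measurable_EFinP.
    + exact/measurable_EFinP.
    + by move=> z _; rewrite lee_fin; exact/lefP/nd_nnsfun_approx.
apply: eq_integral => y _; rewrite -monotone_convergence//.
  - by move=> n; exact/measurable_EFinP.
  - by move=> n z _; rewrite lee_fin.
  - by move=> z _ a b ab; rewrite lee_fin; exact/lefP/nd_nnsfun_approx.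
Qed.

Lemma mPt (t : R) (f : T -> R) : measurable_fun setT f ->
  measurable_fun setT (Pt P t f).
Proof.
move=> mf; rewrite /Pt.
apply: (measurableT_comp (fine_measurable measurableT)).
rewrite (_ : (fun x => \int[P t x]_y (f y)%:E)%E =
   ((fun x => \int[P t x]_y ((EFin \o f)^\+ y)) \-
   (fun x => \int[P t x]_y ((EFin \o f)^\- y)))%E); last first.
  by apply/funext => x; rewrite integralE.
have mEf : measurable_fun setT (EFin \o f) by exact/measurable_EFinP.
apply: emeasurable_funB; apply: mker => //.
- exact: measurable_funepos.
- exact: measurable_funeneg.
Qed.

Lemma abs_le_sq (y : R) : `|y| <= 1 + y ^+ 2.
Proof.
have [h|h] := lerP 0 y.
  by rewrite ger0_norm//; nra.
by rewrite ltr0_norm//; nra.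
Qed.

Lemma mEsq (f : T -> R) : measurable_fun setT f ->
  measurable_fun setT (fun y => ((f y) ^+ 2)%:E).
Proof. by move=> mf; apply/measurable_EFinP; exact: measurable_funX. Qed.

Lemma L2_ae t (t0 : 0 <= t) f : L2 nu f ->
  {ae nu, forall x, setT x -> (P t x).-integrable setT (EFin \o f)}.
Proof.
move=> [mf ff].
have G0 x : (0 <= \int[P t x]_y ((f y) ^+ 2)%:E)%E.
  by apply: integral_ge0 => y _; rewrite lee_fin sqr_ge0.
have iG : nu.-integrable setT (fun x => \int[P t x]_y ((f y)^+2)%:E)%E.
  apply/integrableP; split; first by apply: mker => //[y|]; [rewrite lee_fin sqr_ge0|exact: mEsq].
  under eq_integral do rewrite gee0_abs//.
  rewrite stat_int//; [by move=> y; rewrite lee_fin sqr_ge0|exact: mEsq].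
have := integrable_ae measurableT iG; apply: filterS => x Gx _.
have {}Gx := Gx I.
apply/integrableP; split; first exact/measurable_EFinP.
apply: (@le_lt_trans _ _ (\int[P t x]_y ((1%:E) + ((f y) ^+ 2)%:E))%E).
  apply: ge0_le_integral => //.
  - apply: measurableT_comp; first exact: abse_measurable.
    exact/measurable_EFinP.
  - apply: emeasurable_funD => //; exact: mEsq.
  - by move=> y _ /=; rewrite -EFinD lee_fin abs_le_sq.
rewrite (@ge0_integralD _ _ _ _ _ measurableT (fun=> 1%E))//; last 2 first.
  - by move=> y _; rewrite lee_fin sqr_ge0.
  - exact: mEsq.
rewrite integral_cst// prob_kernel mul1e.
by rewrite lte_add_pinfty// -ge0_fin_numE.
Qed.

Lemma Pt_lin t (t0 : 0 <= t) (a b : R) f g : L2 nu f -> L2 nu g ->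
  {ae nu, forall x, setT x ->
    Pt P t (fun y => a * f y + b * g y) x = a * Pt P t f x + b * Pt P t g x}.
Proof.
move=> Lf Lg.
have := L2_ae _ t0 _ Lf; have := L2_ae _ t0 _ Lg.
apply: filterS2 => x Ig If _.
have {}If := If I; have {}Ig := Ig I.
rewrite /Pt.
under eq_integral do rewrite EFinD !EFinM.
rewrite integralD//; [|exact: integrableZl|exact: integrableZl].
rewrite integralZl// integralZl//.
have fI := integrable_fin_num measurableT If.
have gI := integrable_fin_num measurableT Ig.
by rewrite -(fineK fI) -(fineK gI) -!EFinM -EFinD.
Qed.

Lemma sqr_comb (a b x y : R) :
  (a * x + b * y) ^+ 2 <= 2 * a ^+ 2 * x ^+ 2 + 2 * b ^+ 2 * y ^+ 2.
Proof. have := sqr_ge0 (a * x - b * y); rewrite !expr2 => h; nra. Qed.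

Lemma L2_int f : L2 nu f -> nu.-integrable setT (fun x => ((f x) ^+ 2)%:E).
Proof.
move=> [mf ff]; apply/integrableP; split; first exact: mEsq.
by under eq_integral do rewrite gee0_abs ?lee_fin ?sqr_ge0//.
Qed.

Lemma comb_int (a b : R) (F G H : T -> R) :
  measurable_fun setT H ->
  nu.-integrable setT (fun x => ((F x) ^+ 2)%:E) ->
  nu.-integrable setT (fun x => ((G x) ^+ 2)%:E) ->
  (forall x, H x = a * F x + b * G x) ->
  nu.-integrable setT (fun x => ((H x) ^+ 2)%:E) /\
  (\int[nu]_x ((H x) ^+ 2)%:E <=
    (2 * a ^+ 2)%:E * \int[nu]_x ((F x) ^+ 2)%:E +
    (2 * b ^+ 2)%:E * \int[nu]_x ((G x) ^+ 2)%:E)%E.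
Proof.
move=> mH iF iG HE.
have iS : nu.-integrable setT (fun x => (2 * a ^+ 2)%:E * ((F x) ^+ 2)%:E +
    (2 * b ^+ 2)%:E * ((G x) ^+ 2)%:E)%E.
  by apply: integrableD => //; apply: integrableZl.
have le x : (((H x) ^+ 2)%:E <= (2 * a ^+ 2)%:E * ((F x) ^+ 2)%:E +
    (2 * b ^+ 2)%:E * ((G x) ^+ 2)%:E)%E.
  by rewrite -!EFinM -EFinD lee_fin HE; have := sqr_comb a b (F x) (G x); rewrite !mulrA.
have iH : nu.-integrable setT (fun x => ((H x) ^+ 2)%:E).
  apply: le_integrable iS => //; first exact: mEsq.
  move=> x _; rewrite [X in (X <= _)%E]gee0_abs; last by rewrite lee_fin sqr_ge0.
  exact: le_trans (le x) (lee_abs _).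
split => //.
rewrite -integralZl// -integralZl// -integralD//; [|exact: integrableZl|exact: integrableZl].
by apply: le_integral => // x _; exact: le.
Qed.

Lemma L2_comb (a b : R) u w : L2 nu u -> L2 nu w ->
  L2 nu (fun x => a * u x + b * w x).
Proof.
move=> Lu Lw.
have mH : measurable_fun setT (fun x => a * u x + b * w x).
  by apply: measurable_funD; apply: measurable_funM;
    [exact: measurable_cst|exact: Lu.1|exact: measurable_cst|exact: Lw.1].
split => //.
have [iH _] := comb_int a b _ _ _ mH (L2_int _ Lu) (L2_int _ Lw) (fun x => erefl).
by move/integrableP: iH => [_]; under eq_integral do rewrite gee0_abs ?lee_fin ?sqr_ge0//.
Qed.

Lemma mDfun (t : R) (u Lu : T -> R) : measurable_fun setT u -> measurable_fun setT Lu ->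
  measurable_fun setT (fun x => (Pt P t u x - u x) / t - Lu x).
Proof.
move=> mu mLu; apply: measurable_funB => //; apply: measurable_funM;
  last exact: measurable_cst.
by apply: measurable_funB => //; exact: mPt.
Qed.

Lemma gen_comb (a b : R) (u Lu w Lw : T -> R) :
  generator P nu u Lu -> generator P nu w Lw ->
  generator P nu (fun x => a * u x + b * w x) (fun x => a * Lu x + b * Lw x).
Proof.
move=> [Lu_ [LLu cu]] [Lw_ [LLw cw]].
split; first exact: L2_comb.
split; first exact: L2_comb.
pose Du t x := (Pt P t u x - u x) / t - Lu x.
pose Dw t x := (Pt P t w x - w x) / t - Lw x.
move/fine_cvgP: (cu) => [fu _].
move/fine_cvgP: (cw) => [fw _].
apply: (@squeeze_cvge _ _ _ _ (cst 0%E) _ (fun t => (2 * a ^+ 2)%:E * \int[nu]_x ((Du t x) ^+ 2)%:E + (2 * b ^+ 2)%:E * \int[nu]_x ((Dw t x) ^+ 2)%:E)%E); last 2 first.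
- exact: cvg_cst.
- have cu' : ((fun t => (2 * a ^+ 2)%:E * \int[nu]_x ((Du t x) ^+ 2)%:E) @ 0^'+ --> 0)%E.
    by rewrite -(mule0 (2 * a ^+ 2)%:E); apply: cvgeZl.
  have cw' : ((fun t => (2 * b ^+ 2)%:E * \int[nu]_x ((Dw t x) ^+ 2)%:E) @ 0^'+ --> 0)%E.
    by rewrite -(mule0 (2 * b ^+ 2)%:E); apply: cvgeZl.
  by rewrite -[0%E]adde0; apply: cvgeD.
near=> t.
have t0 : 0 < t by near: t; exact: nbhs_right_gt.
have fut : (\int[nu]_x ((Du t x) ^+ 2)%:E)%E \is a fin_num by near: t.
have fwt : (\int[nu]_x ((Dw t x) ^+ 2)%:E)%E \is a fin_num by near: t.
apply/andP; split; first by apply: integral_ge0 => x _; rewrite lee_fin sqr_ge0.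
have mDu : measurable_fun setT (Du t) by apply: mDfun; [exact: Lu_.1|exact: LLu.1].
have mDw : measurable_fun setT (Dw t) by apply: mDfun; [exact: Lw_.1|exact: LLw.1].
have iDu : nu.-integrable setT (fun x => ((Du t x) ^+ 2)%:E).
  apply/integrableP; split; first exact: mEsq.
  under eq_integral do rewrite gee0_abs ?lee_fin ?sqr_ge0//.
  by rewrite ltey_eq fut.
have iDw : nu.-integrable setT (fun x => ((Dw t x) ^+ 2)%:E).
  apply/integrableP; split; first exact: mEsq.
  under eq_integral do rewrite gee0_abs ?lee_fin ?sqr_ge0//.
  by rewrite ltey_eq fwt.
have mH : measurable_fun setT (fun x => a * Du t x + b * Dw t x).
  by apply: measurable_funD; apply: measurable_funM => //; exact: measurable_cst.
have [_ le] := comb_int a b _ _ _ mH iDu iDw (fun x => erefl).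
rewrite (le_trans _ le)// le_eqVlt; apply/orP; left; apply/eqP.
apply: ae_eq_integral => //.
- apply: mEsq; apply: mDfun.
  + exact: (L2_comb a b _ _ Lu_ Lw_).1.
  + exact: (L2_comb a b _ _ LLu LLw).1.
- exact: mEsq.
have := Pt_lin _ (ltW t0) a b _ _ Lu_ Lw_; apply: filterS => x h _.
rewrite h// /Du /Dw; congr (_%:E); congr (_ ^+ 2).
ring.
Unshelve. all: by end_near.
Qed.

Lemma abs_prod_le (x y : R) : `|x * y| <= x ^+ 2 + y ^+ 2.
Proof.
rewrite normrM.
have := sqr_ge0 (`|x| - `|y|); rewrite -(real_normK (num_real x)) -(real_normK (num_real y)).
have := normr_ge0 x; have := normr_ge0 y; rewrite !expr2 => *; nra.
Qed.

Lemma L2_prod f g : L2 nu f -> L2 nu g ->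
  nu.-integrable setT (fun x => (f x * g x)%:E).
Proof.
move=> Lf Lg.
have iS := integrableD measurableT (L2_int _ Lf) (L2_int _ Lg).
apply: le_integrable iS => //.
  by apply/measurable_EFinP; apply: measurable_funM; [exact: Lf.1|exact: Lg.1].
move=> x _ /=; rewrite lee_fin.
rewrite (ger0_norm (addr_ge0 (sqr_ge0 _) (sqr_ge0 _))).
exact: abs_prod_le.
Qed.

Lemma fine_int_comb (a b : R) (F G : T -> R) :
  nu.-integrable setT (EFin \o F) -> nu.-integrable setT (EFin \o G) ->
  fine (\int[nu]_x ((a * F x + b * G x)%:E))%E =
  a * fine (\int[nu]_x (F x)%:E)%E + b * fine (\int[nu]_x (G x)%:E)%E.
Proof.
move=> If Ig.
under eq_integral do rewrite EFinD !EFinM.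
rewrite integralD//; [|exact: integrableZl|exact: integrableZl].
rewrite integralZl// integralZl//.
have fI := integrable_fin_num measurableT If.
have gI := integrable_fin_num measurableT Ig.
by rewrite -(fineK fI) -(fineK gI) -!EFinM -EFinD.
Qed.

Lemma dform_lin1 (a b : R) (Lu Lw h : T -> R) : L2 nu Lu -> L2 nu Lw -> L2 nu h ->
  dform nu (fun x => a * Lu x + b * Lw x) h = a * dform nu Lu h + b * dform nu Lw h.
Proof.
move=> L1 L2' L3; rewrite /dform.
rewrite (_ : (fun x => ((a * Lu x + b * Lw x) * h x)%:E) =
   (fun x => (a * (Lu x * h x) + b * (Lw x * h x))%:E)); last first.
  by apply/funext => x; rewrite mulrDl !mulrA.
rewrite fine_int_comb; [ring|exact: L2_prod|exact: L2_prod].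
Qed.

Lemma dform_lin2 (a b : R) (Lf u w : T -> R) : L2 nu Lf -> L2 nu u -> L2 nu w ->
  dform nu Lf (fun x => a * u x + b * w x) = a * dform nu Lf u + b * dform nu Lf w.
Proof.
move=> L1 L2' L3; rewrite /dform.
rewrite (_ : (fun x => (Lf x * (a * u x + b * w x))%:E) =
   (fun x => (a * (Lf x * u x) + b * (Lf x * w x))%:E)); last first.
  by apply/funext => x; congr (_%:E); ring.
rewrite fine_int_comb; [ring|exact: L2_prod|exact: L2_prod].
Qed.

Lemma quad_zero (a b : R) : 0 <= b -> (forall s, s * a <= s ^+ 2 * b) -> a = 0.
Proof.
move=> b0 h; have := h (a / (2 * (b + 1))).
set s := a / _.
have hs : s * (2 * (b + 1)) = a.
  by rewrite /s divfK//; apply: lt0r_neq0; rewrite mulr_gt0// ltr_pwDr.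
rewrite -hs expr2 => H.
have : s * s * (b + 2) <= 0 by nra.
have ss : 0 <= s * s by rewrite -expr2 sqr_ge0.
move=> H2; have : s * s = 0.
  apply/eqP; rewrite eq_le ss andbT.
  by rewrite -(pmulr_lle0 _ (_ : 0 < b + 2)) ?ltr_pwDr.
by move/eqP; rewrite mulf_eq0 orbb => /eqP ->; rewrite mul0r.
Qed.

Lemma amgm (x y : R) : 0 <= x -> 0 <= y ->
  Num.sqrt x * Num.sqrt y <= (x + y) / 2.
Proof.
move=> x0 y0; have := sqr_ge0 (Num.sqrt x - Num.sqrt y).
rewrite sqrrB !sqr_sqrtr// => h; lra.
Qed.

Lemma small_eps (X e : R) : 0 <= X -> 0 < e -> e / (X + 1) * X <= e.
Proof.
move=> X0 e0; rewrite -mulrA ler_piMr//; first by rewrite ltW.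
rewrite mulrC ler_pdivrMr ?mul1r ?lerDl//; lra.
Qed.

Lemma neg_aux (Q : R) : Q < 0 -> ~ (-1 * Q + 0 * Q <= 0 * 0).
Proof. move=> h1 h2; lra. Qed.

Lemma fin_aux (A B C D s x1 x2 x3 sq : R) : x1 = 1 * A + s * B ->
  x3 = 1 * C + s * D -> x2 = 1 * x1 + s * x3 -> x1 <= sq -> sq <= (A + x2) / 2 ->
  s * (B - C) <= s ^+ 2 * D.
Proof. move=> -> -> -> h1 h2; rewrite expr2; nra. Qed.

Lemma main : ~ dform_symmetric P nu -> (1%:E < Sect P nu)%E.
Proof.
move=> nsym; rewrite ltNge; apply/negP => S1; apply: nsym.
have sb1 : forall u Lu v Lv, generator P nu u Lu -> generator P nu v Lv ->
   dform nu Lu v <= Num.sqrt (dform nu Lu u) * Num.sqrt (dform nu Lv v).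
  move=> u Lu v Lv gu gv.
  set X := Num.sqrt (dform nu Lu u) * Num.sqrt (dform nu Lv v).
  have X0 : 0 <= X by rewrite mulr_ge0 // sqrtr_ge0.
  apply/ler_addgt0Pr => e e0.
  have X1 : 0 < X + 1 by lra.
  have : (Sect P nu < (1 + e / (X + 1))%:E)%E.
    by apply: le_lt_trans S1 _; rewrite lte_fin ltrDl divr_gt0.
  move/ereal_inf_lt => [_ [C hC <-]]; rewrite lte_fin => Clt.
  have := hC u Lu v Lv gu gv.
  rewrite -mulrA -/X => h.
  apply: (le_trans h).
  apply: le_trans (ler_wpM2r X0 (ltW Clt)) _.
  by rewrite mulrDl mul1r lerD2l small_eps.
have Q0 : forall u Lu, generator P nu u Lu -> 0 <= dform nu Lu u.
  move=> u Lu gu.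
  have gn := gen_comb (-1) 0 _ _ _ _ gu gu.
  have := sb1 _ _ _ _ gu gn.
  have [Lu_ [LLu _]] := gu.
  have Ln := L2_comb (-1) 0 _ _ Lu_ Lu_.
  rewrite (dform_lin1 _ _ _ _ _ LLu LLu Ln) !(dform_lin2 _ _ _ _ _ LLu Lu_ Lu_).
  set Q := dform nu Lu u.
  have -> : -1 * (-1 * Q + 0 * Q) + 0 * (-1 * Q + 0 * Q) = Q by ring.
  have [//|Qn] := lerP 0 Q.
  rewrite ler0_sqrtr; last exact: ltW.
  by move=> /(neg_aux _ Qn).
move=> f Lf g Lg gf gg.
have [Lf_ [LLf _]] := gf; have [Lg_ [LLg _]] := gg.
apply/eqP; rewrite -subr_eq0; apply/eqP.
apply: (@quad_zero _ (dform nu Lg g)); first exact: Q0.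
move=> s.
have gv := gen_comb 1 s _ _ _ _ gf gg.
have Lv_ := L2_comb 1 s _ _ Lf_ Lg_.
have h1 := sb1 _ _ _ _ gf gv.
have Qv0 := Q0 _ _ gv.
have Qf0 := Q0 _ _ gf.
have am := amgm _ _ Qf0 Qv0.
have e1 := dform_lin2 1 s Lf f g LLf Lf_ Lg_.
have e2 := dform_lin1 1 s Lf Lg _ LLf LLg Lv_.
have e3 := dform_lin2 1 s Lg f g LLg Lf_ Lg_.
exact: (fin_aux _ _ _ _ _ _ _ _ _ e1 e3 e2 h1 am).
Qed.
End S.

Theorem proposition3p1 (d : measure_display) (T : measurableType d)
  (R : realType) (P : R -> R.-pker T ~> T) (nu : probability T R) :
  markov_transition P -> stationary P nu -> ~ dform_symmetric P nu ->
  (1%:E < Sect P nu)%E.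
Proof.
move=> _ st; exact: (@main d T R P nu st).
Qed.
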